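(* For $v \in l^2(\mathbb{T}_t; \mathbb{R}^{m_2})$, $k\in\mathbb{T}_t$, $\widetilde{v}_k \in l^2(k; \mathbb{R}^{m_2})$ and $\varepsilon \in\mathbb{R}$, let $v^\varepsilon_\ell=v_k+\varepsilon \widetilde{v}_k$ if $\ell=k$ and $v^\varepsilon_\ell=v_\ell$ if $\ell\neq k$, $\ell\in \mathbb{T}_t$, and $v^\varepsilon=(v_t^\varepsilon, \ldots, v^\varepsilon_{N-1})$. Then \begin{eqnarray*} &&J_2(k, X_k; \alpha^t(x, v^\varepsilon)|_{\mathbb{T}_{k}}, (v_k+\varepsilon \widetilde{v}_k, v|_{\mathbb{T}_{k+1}}))- J_2(k, X_k; \alpha^t(x, v)|_{\mathbb{T}_{k}}, v|_{\mathbb{T}_{k}})\\ &&=2\varepsilon \Big{[}\widetilde{B}_k^TZ_{k+1}+\widetilde{B}_{k}^T\overline{Z}_{k+1}^{(k)}+W_2v_k +(H_k^2)^TR_2(H_k^1X_k+H_k^2v_k+H_k^3\pi_{k+1})\\ &&\hphantom{=}+\sum_{i=t}^{k-1}C_{k}\widetilde{A}_{k-1}\cdots \widetilde{A}_{i+1}\widetilde{C}_{i}^T\overline{Z}_{i+1}^{(k)} \Big{]}^T\widetilde{v}_k+\varepsilon^2\widehat{J}_2(k, 0; \widetilde{v}_k). \end{eqnarray*} Here $(X,\pi)$ solves $X_{k+1}=\widetilde{A}_kX_k+\widetilde{B}_kv_{k}+\widetilde{C}_k\pi_{k+1}$, $\pi_k=C_k^Tv_k+\widetilde{A}_k^T\pi_{k+1}$,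 $X_t=x$, $\pi_N=0$, $k\in\mathbb{T}_t$; $Z$ solves $Z_k=Q_2X_{k}+A^TZ_{k+1}$, $Z_{N}=G_2X_N$, $k \in \mathbb{T}_t$; and for each $k\in\mathbb{T}_t$, $\overline{Z}^{(k)}$ solves $\overline{Z}^{(k)}_{\ell}=(H_{\ell}^1)^TR_2(H_{\ell}^1X_{\ell}+H^2_{\ell}v_{\ell}+H^3_{\ell}\pi_{\ell+1})-(H_{\ell}^1)^TB_1^TZ_{\ell+1}+\widetilde{A}_{\ell}^T\overline{Z}^{(k)}_{\ell+1}$ for $\ell\in\mathbb{T}_{k}$, $\overline{Z}^{(k)}_{i}=\widetilde{A}_{i}^T\overline{Z}^{(k)}_{i+1}$ for $i\in \{t, \ldots,k-1\}$, $\overline{Z}^{(k)}_{N}=0$. Furthermore, \begin{eqnarray*} \widehat{J}_2(k, 0; \widetilde{v}_k)&=&\sum_{\ell=k}^{N-1}\xi_\ell^TQ_2\xi_\ell+ \sum_{\ell=k+1}^{N-1}(\eta^{(k)}_{\ell})^T(H_{\ell}^1)^TR_2H_{\ell}^1\eta^{(k)}_{\ell} + \widetilde{v}_k^TW_{2} \widetilde{v}_k \\ &&+\xi_{N}^TG_2\xi_{N}+(H_k^1\eta^{(k)}_k+H^2_k \widetilde{v}_k)^TR_2(H_k^1\eta^{(k)}_k+H^2_k \widetilde{v}_k), \end{eqnarray*} where $\eta^{(k)}_{t}=0$, $\eta^{(k)}_{i+1}=\widetilde{A}_{i}\eta^{(k)}_{i}+ \widetilde{C}_{i} \widetilde{A}_{i+1}^T\cdots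 \widetilde{A}_{k-1}^TC_{k}^T\widetilde{v}_k$ for $i\in \{t, \ldots, k-1\}$, $\eta^{(k)}_{k+1}=\widetilde{A}_k\eta^{(k)}_k+ \widetilde{B}_k\widetilde{v}_k$, $\eta^{(k)}_{\ell+1}=\widetilde{A}_\ell\eta^{(k)}_{\ell}$ for $\ell\in \mathbb{T}_{k+1}$; and $\xi_k=0$, $\xi_{k+1}=A\xi_k-B_1H_k^1\eta^{(k)}_k+ \widetilde{B}_k\widetilde{v}_k$, $\xi_{\ell+1}=A\xi_\ell-B_1H_{\ell}^1\eta^{(k)}_{\ell}$ for $\ell\in \mathbb{T}_{k+1}$. The product $\widetilde{A}_{i+1}^T\cdots \widetilde{A}_{k-1}^T$ equals $I$ if $i+1>k-1$, and $\widetilde{A}_{k-1}\cdots \widetilde{A}_{i+1}$ is its transpose.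
   Context: Let $N>2$ be an integer, $\mathbb{T}_t=\{t,\ldots,N-1\}$ for $t\in\{0,\ldots,N-1\}$, $l^2(\mathbb{T}_t;\mathbb{R}^m)$ the space of sequences $\{\rho_k,k\in\mathbb{T}_t\}$ with $\rho_k\in\mathbb{R}^m$, $l^2(k;\mathbb{R}^m)=\mathbb{R}^m$, and for a process $v$ let $v|_{\mathbb{T}_k}=(v_k,\ldots,v_{N-1})$. Consider the system $X_{k+1}=AX_k+B_1u_k+B_2v_k$, $X_t=x$, $k\in\mathbb{T}_t$, with cost functionals $J_i(t,x;u,v)=\sum_{k=t}^{N-1}(X_k^TQ_iX_k+u_k^TR_iu_k+v_k^TW_iv_k)+X_N^TG_iX_N$, $i=1,2$, deterministic matrices and $Q_i,G_i,R_i,W_i$ nonnegative definite; $J_i(k,y;\cdot,\cdot)$ denotes the same functional started at time $k$ from state $y$ with controls on $\mathbb{T}_k$ (the state inside is propagated by the original dynamics). Assume $M_k=B_1^TP_{k+1}B_1+R_1$, $k\in\mathbb{T}_t$, are positive definite, where $P_k=Q_1+A^TP_{k+1}A-A^TP_{k+1}B_1M_k^{-1}B_1^TP_{k+1}A$, $P_N=G_1$. Set $H^1_k=M_k^{-1}B_1^TP_{k+1}A$, $H^2_k=M_k^{-1}B_1^TP_{k+1}B_2$, $H^3_k=M_k^{-1}B_1^T$, $\widetilde{A}_k=A-B_1H^1_k$, $\widetilde{B}_k=B_2-B_1H^2_k$, $\widetilde{C}_k=-B_1H^3_k$, $C_k=(B_2^T-B_2^TP_{k+1}B_1M_k^{-1}B_1^T)P_{k+1}A$.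 The follower's equilibrium response map is $[\alpha^t(x,v)]_k=-(H^1_kX_k+H^2_kv_k+H^3_k\pi_{k+1})$, $k\in\mathbb{T}_t$, where $(X,\pi)$ solves $X_{k+1}=\widetilde{A}_kX_k+\widetilde{B}_kv_k+\widetilde{C}_k\pi_{k+1}$, $\pi_k=C_k^Tv_k+\widetilde{A}_k^T\pi_{k+1}$, $X_t=x$, $\pi_N=0$. *)

(* Defs.v *)
From HB Require Import structures.
From mathcomp Require Import all_boot all_order all_algebra.
Set Implicit Arguments. Unset Strict Implicit. Unset Printing Implicit Defensive.
Import Order.TTheory GRing.Theory Num.Theory.
Local Open Scope ring_scope.

Definition qf {R : realFieldType} {p : nat} (M : 'M[R]_p) (x : 'cV[R]_p) : R :=
  (x^T *m M *m x) 0 0.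

Definition nonneg_def {R : realFieldType} {p : nat} (M : 'M[R]_p) : Prop :=
  M^T = M /\ forall x : 'cV[R]_p, 0 <= qf M x.

Definition pos_def {R : realFieldType} {p : nat} (M : 'M[R]_p) : Prop :=
  M^T = M /\ forall x : 'cV[R]_p, x != 0 -> 0 < qf M x.

(* mprod F a len = F (a+len-1) *m ... *m F a ; identity if len = 0 *)
Fixpoint mprod {R : realFieldType} {p : nat} (F : nat -> 'M[R]_p) (a len : nat)
  : 'M[R]_p :=
  match len with
  | 0 => 1%:M
  | len'.+1 => F (a + len')%N *m mprod F a len'
  end.

(* forward recursion: s t = x0, s (k+1) = step k (s k) for k >= t *)
Definition frec {T : Type} (t : nat) (x0 : T) (step : nat -> T -> T) (k : nat) : T :=
  (fix aux j := match j with 0 => x0 | j'.+1 => step (t + j')%N (aux j') end) (k - t)%N.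

(* backward recursion: s k = term for k >= N, s k = step k (s (k+1)) for k < N *)
Definition brec {T : Type} (N : nat) (term : T) (step : nat -> T -> T) (k : nat) : T :=
  (fix aux j := match j with 0 => term | j'.+1 => step (N - j)%N (aux j') end) (N - k)%N.

Section LQ.
Context {R : realFieldType} {n m1 m2 : nat}.
Variable N : nat.
Variables (A : 'M[R]_n) (B1 : 'M[R]_(n, m1)) (B2 : 'M[R]_(n, m2)).
Variables (Q1 G1 : 'M[R]_n) (R1 : 'M[R]_m1).

Definition Pmat : nat -> 'M[R]_n :=
  brec N G1 (fun _ P => Q1 + A^T *m P *m A
                 - A^T *m P *m B1 *m invmx (B1^T *m P *m B1 + R1) *m B1^T *m P *m A).

Definition Mmat (k : nat) : 'M[R]_m1 := B1^T *m Pmat k.+1 *m B1 + R1.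

Definition H1 (k : nat) : 'M[R]_(m1, n) := invmx (Mmat k) *m B1^T *m Pmat k.+1 *m A.
Definition H2 (k : nat) : 'M[R]_(m1, m2) := invmx (Mmat k) *m B1^T *m Pmat k.+1 *m B2.
Definition H3 (k : nat) : 'M[R]_(m1, n) := invmx (Mmat k) *m B1^T.

Definition Atl (k : nat) : 'M[R]_n := A - B1 *m H1 k.
Definition Btl (k : nat) : 'M[R]_(n, m2) := B2 - B1 *m H2 k.
Definition Ctl (k : nat) : 'M[R]_n := - (B1 *m H3 k).
Definition Cm (k : nat) : 'M[R]_(m2, n) :=
  (B2^T - B2^T *m Pmat k.+1 *m B1 *m invmx (Mmat k) *m B1^T) *m Pmat k.+1 *m A.

Definition costate (v : nat -> 'cV[R]_m2) : nat -> 'cV[R]_n :=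
  brec N 0 (fun k p => (Cm k)^T *m v k + (Atl k)^T *m p).

Definition fstate (t : nat) (x : 'cV[R]_n) (v : nat -> 'cV[R]_m2) : nat -> 'cV[R]_n :=
  frec t x (fun k X => Atl k *m X + Btl k *m v k + Ctl k *m costate v k.+1).

Definition alpha (t : nat) (x : 'cV[R]_n) (v : nat -> 'cV[R]_m2) (k : nat) : 'cV[R]_m1 :=
  - (H1 k *m fstate t x v k + H2 k *m v k + H3 k *m costate v k.+1).

Definition Jcost (Q G : 'M[R]_n) (Rw : 'M[R]_m1) (W : 'M[R]_m2) (k : nat)
    (y : 'cV[R]_n) (u : nat -> 'cV[R]_m1) (v : nat -> 'cV[R]_m2) : R :=
  let Xs := frec k y (fun l X => A *m X + B1 *m u l + B2 *m v l) in
  \sum_(k <= l < N) (qf Q (Xs l) + qf Rw (u l) + qf W (v l)) + qf G (Xs N).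

End LQ.

(* Main.v *)
Require Import Defs.
From HB Require Import structures.
From mathcomp Require Import all_boot all_order all_algebra.
From mathcomp Require Import ring lra zify.
Import Order.TTheory GRing.Theory Num.Theory.
Local Open Scope ring_scope.

Lemma frec_t {T : Type} t (x0 : T) step : frec t x0 step t = x0.
Proof. by rewrite /frec subnn. Qed.

Lemma frec_S {T : Type} t (x0 : T) step k : (t <= k)%N ->
  frec t x0 step k.+1 = step k (frec t x0 step k).
Proof. move=> h; rewrite /frec subSn //=; congr step; lia. Qed.

Lemma brec_N {T : Type} N (term : T) step k : (N <= k)%N -> brec N term step k = term.
Proof. by move=> h; rewrite /brec (eqP (_ : (N - k == 0)%N)) // subn_eq0. Qed.

Lemma brec_S {T : Type} N (term : T) step k : (k < N)%N ->
  brec N term step k = step k (brec N term step k.+1).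
Proof.
move=> h; rewrite /brec (_ : (N - k = (N - k.+1).+1)%N); last lia.
rewrite /=; congr step; lia.
Qed.

Lemma mprodS_r {R : realFieldType} {p : nat} (F : nat -> 'M[R]_p) a len :
  mprod F a len.+1 = mprod F a.+1 len *m F a.
Proof.
elim: len => [|len IH]; first by rewrite /= addn0 mulmx1 mul1mx.
rewrite -[mprod F a len.+2]/(F (a + len.+1)%N *m mprod F a len.+1) IH.
rewrite -[mprod F a.+1 len.+1]/(F (a.+1 + len)%N *m mprod F a.+1 len).
rewrite mulmxA; congr (F _ *m _ *m _); lia.
Qed.

Definition dot {R : realFieldType} {p : nat} (a b : 'cV[R]_p) : R := (a^T *m b) 0 0.

Section Dot.
Context {R : realFieldType} {p : nat}.
Implicit Types a b c : 'cV[R]_p.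
Lemma dotDl a b c : dot (a + b) c = dot a c + dot b c.
Proof. by rewrite /dot linearD /= mulmxDl mxE. Qed.
Lemma dotDr a b c : dot a (b + c) = dot a b + dot a c.
Proof. by rewrite /dot mulmxDr mxE. Qed.
Lemma dotNl a b : dot (- a) b = - dot a b.
Proof. by rewrite /dot linearN /= mulNmx mxE. Qed.
Lemma dotNr a b : dot a (- b) = - dot a b.
Proof. by rewrite /dot mulmxN mxE. Qed.
Lemma dotBl a b c : dot (a - b) c = dot a c - dot b c.
Proof. by rewrite dotDl dotNl. Qed.
Lemma dotBr a b c : dot a (b - c) = dot a b - dot a c.
Proof. by rewrite dotDr dotNr. Qed.
Lemma dotZl e a b : dot (e *: a) b = e * dot a b.
Proof. by rewrite /dot linearZ /= -scalemxAl mxE. Qed.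
Lemma dotZr e a b : dot a (e *: b) = e * dot a b.
Proof. by rewrite /dot -scalemxAr mxE. Qed.
Lemma dot0l b : dot 0 b = 0.
Proof. by rewrite /dot trmx0 mul0mx mxE. Qed.
Lemma dot0r a : dot a 0 = 0.
Proof. by rewrite /dot mulmx0 mxE. Qed.
Lemma dotC a b : dot a b = dot b a.
Proof.
rewrite /dot; transitivity ((a^T *m b)^T 0 0); first by rewrite [RHS]mxE.
by rewrite trmx_mul trmxK.
Qed.
Lemma dot_sumL (I : Type) (r : seq I) (P : pred I) (F : I -> 'cV[R]_p) c :
  dot (\sum_(i <- r | P i) F i) c = \sum_(i <- r | P i) dot (F i) c.
Proof.
elim/big_rec2: _ => [|i y1 y2 _ <-]; first by rewrite dot0l.
by rewrite dotDl.
Qed.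
End Dot.

Lemma dotMl {R : realFieldType} {p q : nat} (M : 'M[R]_(q, p)) a b :
  dot (M *m a) b = dot a (M^T *m b).
Proof. by rewrite /dot trmx_mul mulmxA. Qed.

Lemma qf_dot {R : realFieldType} {p : nat} (M : 'M[R]_p) a : qf M a = dot a (M *m a).
Proof. by rewrite /qf /dot mulmxA. Qed.

Lemma qfN {R : realFieldType} {p : nat} (M : 'M[R]_p) a : qf M (- a) = qf M a.
Proof. by rewrite !qf_dot mulmxN dotNl dotNr opprK. Qed.

Lemma qf_mul {R : realFieldType} {p q : nat} (M : 'M[R]_p) (H : 'M[R]_(p, q)) a :
  qf M (H *m a) = qf (H^T *m M *m H) a.
Proof. by rewrite !qf_dot dotMl !mulmxA. Qed.

Lemma qf0 {R : realFieldType} {p : nat} (M : 'M[R]_p) : qf M 0 = 0.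
Proof. by rewrite qf_dot dot0l. Qed.

Lemma qfD {R : realFieldType} {p : nat} (M : 'M[R]_p) a b e : M^T = M ->
  qf M (a + e *: b) = qf M a + 2 * e * dot (M *m a) b + e ^+ 2 * qf M b.
Proof.
move=> sM; rewrite !qf_dot mulmxDr -scalemxAr dotDl !dotDr !dotZl !dotZr.
rewrite [dot a (M *m b)]dotC dotMl sM [dot b (M *m a)]dotC.
ring.
Qed.

Lemma adjoint {R : realFieldType} {p : nat} (a b : nat) (z g y h : nat -> 'cV[R]_p)
  (M : nat -> 'M[R]_p) : (a <= b)%N ->
  (forall l, (a <= l < b)%N -> z l = g l + (M l)^T *m z l.+1) ->
  (forall l, (a <= l < b)%N -> y l.+1 = M l *m y l + h l) ->
  \sum_(a <= l < b) dot (g l) (y l)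
  = dot (z a) (y a) - dot (z b) (y b) + \sum_(a <= l < b) dot (z l.+1) (h l).
Proof.
move=> ab; elim: b ab => [|b IH] ab hz hy.
  have -> : a = 0%N by lia.
  by rewrite !big_geq // subrr addr0.
case: (ltnP a b.+1) => hab; last first.
  have -> : a = b.+1 by lia.
  by rewrite !big_geq // subrr addr0.
have hab' : (a <= b)%N by lia.
rewrite !big_nat_recr //=.
rewrite IH //; last first.
- by move=> l hl; apply: hy; lia.
- by move=> l hl; apply: hz; lia.
have hb : (a <= b < b.+1)%N by lia.
rewrite (hz b hb) (hy b hb).
rewrite dotDl dotDr dotMl trmxK.
ring.
Qed.

Lemma dotMr {R : realFieldType} {p q : nat} (M : 'M[R]_(p, q)) a b :
  dot a (M *m b) = dot (M^T *m a) b.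
Proof. by rewrite dotC dotMl dotC. Qed.

Lemma sum_delta {R : realFieldType} (k N : nat) (F : nat -> R) : (k < N)%N ->
  \sum_(k <= l < N) (if l == k then F l else 0) = F k.
Proof.
move=> kN; rewrite big_ltn // eqxx big_nat_cond big1 ?addr0 //.
by move=> l /andP[/andP[kl _] _]; rewrite gtn_eqF.
Qed.


Section Ent.
Context {R : realFieldType} {m n : nat}.
Implicit Types a b : 'M[R]_(m, n).
Lemma eD a b i j : (a + b) i j = a i j + b i j. Proof. by rewrite mxE. Qed.
Lemma eN a i j : (- a) i j = - a i j. Proof. by rewrite mxE. Qed.
Lemma eZ e a i j : (e *: a) i j = e * a i j. Proof. by rewrite mxE. Qed.
Lemma e0 i j : (0 : 'M[R]_(m, n)) i j = 0. Proof. by rewrite mxE. Qed.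
End Ent.

Ltac mx_lin := apply/matrixP => ? ?; rewrite ?(eD, eN, eZ, e0); ring.

Theorem proposition1 (R : realFieldType) (n m1 m2 N t : nat)
  (A : 'M[R]_n) (B1 : 'M[R]_(n, m1)) (B2 : 'M[R]_(n, m2))
  (Q1 Q2 G1 G2 : 'M[R]_n) (R1 R2 : 'M[R]_m1) (W1 W2 : 'M[R]_m2) :
  (2 < N)%N -> (t < N)%N ->
  nonneg_def Q1 -> nonneg_def Q2 -> nonneg_def G1 -> nonneg_def G2 ->
  nonneg_def R1 -> nonneg_def R2 -> nonneg_def W1 -> nonneg_def W2 ->
  (forall k, (t <= k < N)%N -> pos_def (Mmat N A B1 Q1 G1 R1 k)) ->
  let H1 := H1 N A B1 Q1 G1 R1 in
  let H2 := H2 N A B1 B2 Q1 G1 R1 in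
  let H3 := H3 N A B1 Q1 G1 R1 in
  let At := Atl N A B1 Q1 G1 R1 in
  let Bt := Btl N A B1 B2 Q1 G1 R1 in
  let Ct := Ctl N A B1 Q1 G1 R1 in
  let C := Cm N A B1 B2 Q1 G1 R1 in
  forall (x : 'cV[R]_n) (v : nat -> 'cV[R]_m2) (k : nat) (vt : 'cV[R]_m2) (eps : R),
  (t <= k < N)%N ->
  let veps := fun l : nat => if l == k then v k + eps *: vt else v l in
  let X := fstate N A B1 B2 Q1 G1 R1 t x v in
  let pi := costate N A B1 B2 Q1 G1 R1 v in
  forall (Z Zb eta xi : nat -> 'cV[R]_n),
  (* Z *)
  Z N = G2 *m X N ->
  (forall l, (t <= l < N)%N -> Z l = Q2 *m X l + A^T *m Z l.+1) ->
  (* Zbar^(k) *)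
  Zb N = 0 ->
  (forall l, (k <= l < N)%N ->
     Zb l = (H1 l)^T *m R2 *m (H1 l *m X l + H2 l *m v l + H3 l *m pi l.+1)
            - (H1 l)^T *m B1^T *m Z l.+1 + (At l)^T *m Zb l.+1) ->
  (forall i, (t <= i < k)%N -> Zb i = (At i)^T *m Zb i.+1) ->
  (* eta^(k) *)
  eta t = 0 ->
  (forall i, (t <= i < k)%N ->
     eta i.+1 = At i *m eta i
                + Ct i *m (mprod At i.+1 (k.-1 - i))^T *m (C k)^T *m vt) ->
  eta k.+1 = At k *m eta k + Bt k *m vt ->
  (forall l, (k.+1 <= l < N)%N -> eta l.+1 = At l *m eta l) ->
  (* xi *)
  xi k = 0 ->
  xi k.+1 = A *m xi k - B1 *m H1 k *m eta k + Bt k *m vt ->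
  (forall l, (k.+1 <= l < N)%N -> xi l.+1 = A *m xi l - B1 *m H1 l *m eta l) ->
  let Jhat :=
    \sum_(k <= l < N) qf Q2 (xi l)
    + \sum_(k.+1 <= l < N) qf ((H1 l)^T *m R2 *m H1 l) (eta l)
    + qf W2 vt + qf G2 (xi N)
    + qf R2 (H1 k *m eta k + H2 k *m vt) in
  let grad :=
    (Bt k)^T *m Z k.+1 + (Bt k)^T *m Zb k.+1 + W2 *m v k
    + (H2 k)^T *m R2 *m (H1 k *m X k + H2 k *m v k + H3 k *m pi k.+1)
    + \sum_(t <= i < k) C k *m mprod At i.+1 (k.-1 - i) *m (Ct i)^T *m Zb i.+1 in
  Jcost N A B1 B2 Q2 G2 R2 W2 k (X k) (alpha N A B1 B2 Q1 G1 R1 t x veps) veps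
  - Jcost N A B1 B2 Q2 G2 R2 W2 k (X k) (alpha N A B1 B2 Q1 G1 R1 t x v) v
  = 2 * eps * (grad^T *m vt) 0 0 + eps ^+ 2 * Jhat.
Proof.
move=> _ tN _ [sQ2 _] _ [sG2 _] _ [sR2 _] _ [sW2 _] _ H1 H2 H3 At Bt Ct C.
move=> x v k vt eps /andP[tk kN] veps X pi Z Zb eta xi ZN Zs ZbN Zbs Zbs2.
move=> eta_t eta_s eta_k eta_s2 xi_k xi_k1 xi_s Jhat grad.
set pe := costate N A B1 B2 Q1 G1 R1 veps.
set Xe := fstate N A B1 B2 Q1 G1 R1 t x veps.
set u := alpha N A B1 B2 Q1 G1 R1 t x v.
set ue := alpha N A B1 B2 Q1 G1 R1 t x veps.
have pS : forall l, (l < N)%N -> pi l = (C l)^T *m v l + (At l)^T *m pi l.+1.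
  by move=> l h; apply: brec_S.
have peS : forall l, (l < N)%N -> pe l = (C l)^T *m veps l + (At l)^T *m pe l.+1.
  by move=> l h; apply: brec_S.
have pN : forall l, (N <= l)%N -> pi l = 0 by move=> l h; apply: brec_N.
have peN : forall l, (N <= l)%N -> pe l = 0 by move=> l h; apply: brec_N.
have XS : forall l, (t <= l)%N ->
   X l.+1 = At l *m X l + Bt l *m v l + Ct l *m pi l.+1.
  by move=> l h; apply: frec_S.
have XeS : forall l, (t <= l)%N ->
   Xe l.+1 = At l *m Xe l + Bt l *m veps l + Ct l *m pe l.+1.
  by move=> l h; apply: frec_S.
have Xt : X t = x by apply: frec_t.
have Xet : Xe t = x by apply: frec_t.
have vk : veps k = v k + eps *: vt by rewrite /veps eqxx.
have vl : forall l, l != k -> veps l = v l by move=> l /negbTE h; rewrite /veps h.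
have pe_eq : forall l, (k < l)%N -> pe l = pi l.
  move=> l; move: {2}(N - l)%N (erefl (N - l)%N) => d.
  elim: d l => [|d IH] l hd kl.
    by rewrite pN ?peN //; lia.
  have lN : (l < N)%N by lia.
  rewrite pS // peS // vl; last by rewrite gtn_eqF.
  by rewrite IH //; lia.
pose s l := (mprod At l (k - l))^T *m (C k)^T *m vt.
have pe_diff : forall l, (l <= k)%N -> pe l = pi l + eps *: s l.
  move=> l; move: {2}(k - l)%N (erefl (k - l)%N) => d.
  elim: d l => [|d IH] l hd lk.
    have -> : l = k by lia.
    rewrite pS // peS // vk pe_eq // /s subnn (_ : mprod At k 0 = 1%:M) // trmx1 mul1mx.
    rewrite mulmxDr -scalemxAr. mx_lin.
  have lN : (l < N)%N by lia.
  rewrite pS // peS // vl; last by rewrite ltn_eqF //; lia.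
  rewrite IH; [|lia|lia].
  rewrite /s (_ : (k - l = (k - l.+1).+1)%N); last lia.
  rewrite mprodS_r (trmx_mul (mprod _ _ _)) mulmxDr -scalemxAr !mulmxA. mx_lin.
have Xe_diff : forall l, (t <= l <= N)%N -> Xe l = X l + eps *: eta l.
  move=> l; move: {2}(l - t)%N (erefl (l - t)%N) => d.
  elim: d l => [|d IH] l hd hl.
    have -> : l = t by lia.
    by rewrite Xt Xet eta_t scaler0 addr0.
  case: l hd hl => [|j] hd hl; first lia.
  have tj : (t <= j)%N by lia.
  rewrite XS // XeS // IH; [|lia|lia].
  case: (ltngtP j k) => hjk.
  - rewrite vl ?ltn_eqF // pe_diff // eta_s; last lia.
    rewrite /s (_ : (k - j.+1 = k.-1 - j)%N); last lia.
    rewrite !mulmxDr -!scalemxAr ?mulmxA. mx_lin.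
  - rewrite vl ?gtn_eqF // pe_eq; last lia.
    rewrite eta_s2; last lia.
    rewrite !mulmxDr -!scalemxAr ?mulmxA. mx_lin.
  - rewrite hjk vk pe_eq // eta_k.
    rewrite !mulmxDr -!scalemxAr ?mulmxA. mx_lin.
have uE : forall l, u l = -(H1 l *m X l + H2 l *m v l + H3 l *m pi l.+1) by [].
have ueE : forall l, ue l = -(H1 l *m Xe l + H2 l *m veps l + H3 l *m pe l.+1) by [].
have AtE : forall l, At l = A - B1 *m H1 l by [].
have BtE : forall l, Bt l = B2 - B1 *m H2 l by [].
have CtE : forall l, Ct l = - (B1 *m H3 l) by [].
have XA : forall l, (t <= l)%N -> X l.+1 = A *m X l + B1 *m u l + B2 *m v l.
  move=> l tl; rewrite XS // uE AtE BtE CtE.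
  rewrite !(mulmxBl, mulmxDr, mulmxN, mulNmx, mulmxDl) ?mulmxA. mx_lin.
pose d l := -(H1 l *m eta l + (if l == k then H2 l *m vt else 0)).
pose dv l := if l == k then vt else 0.
have veps_eq : forall l, veps l = v l + eps *: dv l.
  move=> l; rewrite /veps /dv; case: eqP => [->|_] //.
  by rewrite scaler0 addr0.
have ue_eq : forall l, (k <= l < N)%N -> ue l = u l + eps *: d l.
  move=> l /andP[kl lN]; rewrite ueE uE Xe_diff; last lia.
  rewrite pe_eq; last lia.
  rewrite veps_eq /d /dv; case: (eqVneq l k) => [->|ne].
    rewrite !mulmxDr -!scalemxAr. mx_lin.
  rewrite !mulmxDr -!scalemxAr mulmx0. mx_lin.
have hx : forall l, (k <= l < N)%N ->
   xi l.+1 = A *m xi l - B1 *m H1 l *m eta l + (if l == k then Bt k *m vt else 0).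
  move=> l /andP[kl lN]; case: (eqVneq l k) => [->|ne].
    by rewrite xi_k1.
  rewrite addr0 xi_s //; lia.
pose Ye := frec k (X k) (fun l Y => A *m Y + B1 *m ue l + B2 *m veps l).
pose Y0 := frec k (X k) (fun l Y => A *m Y + B1 *m u l + B2 *m v l).
have Y0_eq : forall l, (k <= l <= N)%N -> Y0 l = X l.
  move=> l; move: {2}(l - k)%N (erefl (l - k)%N) => dd.
  elim: dd l => [|dd IH] l hd hl.
    have -> : l = k by lia.
    by rewrite /Y0 frec_t.
  case: l hd hl => [|j] hd hl; first lia.
  rewrite /Y0 frec_S; last lia.
  rewrite -/Y0 IH; [|lia|lia].
  by rewrite XA //; lia.
have Ye_eq : forall l, (k <= l <= N)%N -> Ye l = X l + eps *: xi l.
  move=> l; move: {2}(l - k)%N (erefl (l - k)%N) => dd.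
  elim: dd l => [|dd IH] l hd hl.
    have -> : l = k by lia.
    by rewrite /Ye frec_t xi_k scaler0 addr0.
  case: l hd hl => [|j] hd hl; first lia.
  rewrite /Ye frec_S; last lia.
  rewrite -/Ye IH; [|lia|lia].
  rewrite XA; last lia.
  rewrite hx; last lia.
  rewrite ue_eq; last lia.
  rewrite veps_eq /d /dv; case: (eqVneq j k) => [->|ne].
    rewrite BtE !(mulmxBl, mulmxDr, mulmxN, mulNmx, mulmxDl, scalerDr, scalerN) -!scalemxAr ?mulmxA. mx_lin.
  rewrite !(mulmxBl, mulmxDr, mulmxN, mulNmx, mulmxDl, scalerDr, scalerN, mulmx0, addr0, scaler0) -!scalemxAr ?mulmxA. mx_lin.
have J1 : Jcost N A B1 B2 Q2 G2 R2 W2 k (X k) ue veps =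
  \sum_(k <= l < N) (qf Q2 (Ye l) + qf R2 (ue l) + qf W2 (veps l)) + qf G2 (Ye N) by [].
have J0 : Jcost N A B1 B2 Q2 G2 R2 W2 k (X k) u v =
  \sum_(k <= l < N) (qf Q2 (Y0 l) + qf R2 (u l) + qf W2 (v l)) + qf G2 (Y0 N) by [].
rewrite J1 J0.
pose b l := dot (Q2 *m X l) (xi l) + dot (R2 *m u l) (d l) + dot (W2 *m v l) (dv l).
pose c l := qf Q2 (xi l) + qf R2 (d l) + qf W2 (dv l).
have E : forall l, (k <= l < N)%N ->
  qf Q2 (Ye l) + qf R2 (ue l) + qf W2 (veps l)
  = (qf Q2 (Y0 l) + qf R2 (u l) + qf W2 (v l)) + 2 * eps * b l + eps ^+ 2 * c l.
  move=> l hl; rewrite Ye_eq; last lia.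
  rewrite Y0_eq; last lia.
  rewrite ue_eq // veps_eq !qfD // /b /c. ring.
have E' : \sum_(k <= l < N) (qf Q2 (Ye l) + qf R2 (ue l) + qf W2 (veps l))
  = \sum_(k <= l < N) (qf Q2 (Y0 l) + qf R2 (u l) + qf W2 (v l))
    + 2 * eps * \sum_(k <= l < N) b l + eps ^+ 2 * \sum_(k <= l < N) c l.
  rewrite (eq_big_nat _ _ E) !big_split /= -!mulr_sumr !big_split /=. ring.
rewrite E' Ye_eq; last lia.
rewrite Y0_eq; last lia.
rewrite qfD //.
pose w l := H1 l *m X l + H2 l *m v l + H3 l *m pi l.+1.
have Sb : \sum_(k <= l < N) b l = \sum_(k <= l < N) dot (Q2 *m X l) (xi l)
   + \sum_(k <= l < N) dot (R2 *m u l) (d l) + \sum_(k <= l < N) dot (W2 *m v l) (dv l).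
  by rewrite /b !big_split.
have EqW : \sum_(k <= l < N) dot (W2 *m v l) (dv l) = dot (W2 *m v k) vt.
  rewrite -(@sum_delta _ k N (fun l => dot (W2 *m v l) vt) kN); apply: eq_bigr => l _.
  by rewrite /dv; case: eqP => [->|_] //; rewrite dot0r.
have EqR : \sum_(k <= l < N) dot (R2 *m u l) (d l)
   = \sum_(k <= l < N) dot ((H1 l)^T *m R2 *m w l) (eta l)
     + dot ((H2 k)^T *m R2 *m w k) vt.
  rewrite -(@sum_delta _ k N (fun l => dot ((H2 l)^T *m R2 *m w l) vt) kN) -big_split.
  apply: eq_bigr => l _; rewrite /d uE -/(w l) mulmxN dotNl dotNr opprK.
  case: eqP => [->|_]; rewrite ?addr0 ?dotDr !dotMr !mulmxA //.
  by rewrite [RHS]addr0.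
pose hxx l := - (B1 *m H1 l *m eta l) + (if l == k then Bt k *m vt else 0).
have EqZ := adjoint k N Z (fun l => Q2 *m X l) xi hxx (fun _ => A) (ltnW kN).
rewrite xi_k dot0r ZN sub0r in EqZ.
have hz1 : forall l, (k <= l < N)%N -> Z l = Q2 *m X l + A^T *m Z l.+1.
  by move=> l hl; apply: Zs; lia.
have hy1 : forall l, (k <= l < N)%N -> xi l.+1 = A *m xi l + hxx l.
  by move=> l hl; rewrite hx // addrA.
have {}EqZ := EqZ hz1 hy1.
have EqH : \sum_(k <= l < N) dot (Z l.+1) (hxx l)
   = - \sum_(k <= l < N) dot ((H1 l)^T *m B1^T *m Z l.+1) (eta l)
     + dot ((Bt k)^T *m Z k.+1) vt.
  rewrite -sumrN -(@sum_delta _ k N (fun l => dot ((Bt l)^T *m Z l.+1) vt) kN) -big_split.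
  apply: eq_bigr => l _; rewrite /hxx dotDr dotNr dotMr trmx_mul.
  by case: eqP => [->|_]; rewrite ?dot0r ?dotMr.
pose g l := (H1 l)^T *m R2 *m w l - (H1 l)^T *m B1^T *m Z l.+1.
pose h2 l := if l == k then Bt k *m vt else 0.
have hz2 : forall l, (k <= l < N)%N -> Zb l = g l + (At l)^T *m Zb l.+1.
  by move=> l hl; rewrite Zbs.
have hy2 : forall l, (k <= l < N)%N -> eta l.+1 = At l *m eta l + h2 l.
  move=> l /andP[kl lN]; rewrite /h2; case: eqP => [->|ne]; first by rewrite eta_k.
  rewrite addr0 eta_s2 //; apply/andP; split => //; rewrite ltn_neqAle kl andbT.
  by apply/eqP => h; apply: ne.
have EqZb := adjoint k N Zb g eta h2 At (ltnW kN) hz2 hy2.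
rewrite ZbN dot0l subr0 in EqZb.
have Eg : \sum_(k <= l < N) dot (g l) (eta l)
   = \sum_(k <= l < N) dot ((H1 l)^T *m R2 *m w l) (eta l)
     - \sum_(k <= l < N) dot ((H1 l)^T *m B1^T *m Z l.+1) (eta l).
  by rewrite -sumrB; apply: eq_bigr => l _; rewrite dotBl.
have Eh2 : \sum_(k <= l < N) dot (Zb l.+1) (h2 l) = dot ((Bt k)^T *m Zb k.+1) vt.
  rewrite -(@sum_delta _ k N (fun l => dot ((Bt l)^T *m Zb l.+1) vt) kN).
  apply: eq_bigr => l _; rewrite /h2; case: eqP => [->|_]; by rewrite ?dot0r ?dotMr.
pose h3 i := Ct i *m (mprod At i.+1 (k.-1 - i))^T *m (C k)^T *m vt.
have hz3 : forall i, (t <= i < k)%N -> Zb i = (fun _ => 0) i + (At i)^T *m Zb i.+1.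
  by move=> i hi; rewrite add0r Zbs2.
have EqZb3 := adjoint t k Zb (fun _ => 0) eta h3 At tk hz3 eta_s.
rewrite eta_t dot0r sub0r big1 in EqZb3; last by move=> i _; rewrite dot0l.
have Eh3 : \sum_(t <= i < k) dot (Zb i.+1) (h3 i)
   = \sum_(t <= i < k) dot (C k *m mprod At i.+1 (k.-1 - i) *m (Ct i)^T *m Zb i.+1) vt.
  by apply: eq_bigr => i _; rewrite /h3 dotMr !trmx_mul !trmxK !mulmxA.
have Egrad : dot grad vt = dot ((Bt k)^T *m Z k.+1) vt + dot ((Bt k)^T *m Zb k.+1) vt
   + dot (W2 *m v k) vt + dot ((H2 k)^T *m R2 *m w k) vt
   + \sum_(t <= i < k) dot (C k *m mprod At i.+1 (k.-1 - i) *m (Ct i)^T *m Zb i.+1) vt.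
  by rewrite /grad !dotDl dot_sumL.
have L : \sum_(k <= l < N) b l + dot (G2 *m X N) (xi N) = dot grad vt.
  rewrite Sb EqW EqR EqZ EqH Egrad -Eh3.
  move: EqZb; rewrite Eg Eh2 => EqZb.
  lra.
have Jq : \sum_(k <= l < N) c l + qf G2 (xi N) = Jhat.
  have EW : \sum_(k <= l < N) qf W2 (dv l) = qf W2 vt.
    rewrite big_ltn // /dv eqxx big_nat_cond big1 ?addr0 //.
    by move=> l /andP[/andP[kl _] _]; rewrite gtn_eqF // qf0.
  have ER : \sum_(k <= l < N) qf R2 (d l)
     = \sum_(k.+1 <= l < N) qf ((H1 l)^T *m R2 *m H1 l) (eta l)
       + qf R2 (H1 k *m eta k + H2 k *m vt).
    rewrite big_ltn // /d eqxx qfN addrC; congr (_ + _).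
    apply: eq_big_nat => l /andP[kl _]; rewrite gtn_eqF // addr0 qfN qf_mul //.
  rewrite /c !big_split /= EW ER /Jhat. ring.
rewrite -[(grad^T *m vt) 0 0]/(dot grad vt) -L -Jq. ring.
Qed.
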